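(* Let $E$ be a Banach lattice. If $E$ has the unbounded Grothendieck property (UGP), then $E$ has the disjoint Grothendieck property (DGP); and if $E$ has the DGP, then $E$ has the weak Grothendieck property (WGP).
   Context: Let $E$ be a Banach lattice with (norm) dual $E'$. Elements $x',y'\in E'$ are disjoint if $|x'|\wedge|y'|=0$; a sequence is disjoint if its terms are pairwise disjoint. A sequence $(x_n')\subseteq E'$ is unbounded weak$^*$ convergent to $x'\in E'$ (written $x_n'\xrightarrow{uaw^*}x'$) if $|x_n'-x'|\wedge u'\to 0$ in the weak$^*$ topology $\sigma(E',E)$ for every $u'\in E'_+$. $E$ has the WGP if every disjoint sequence $(x_n')\subseteq E'$ with $x_n'\to 0$ weak$^*$ satisfies $x_n'\to 0$ weakly (i.e. in $\sigma(E',E'')$). $E$ has the DGP if every norm bounded disjoint sequence $(x_n')\subseteq E'$ satisfies $x_n'\to 0$ weakly. $E$ has the UGP if every norm bounded sequence $(x_n')\subseteq E'$ with $x_n'\xrightarrow{uaw^*}0$ satisfies $x_n'\to0$ weakly. *)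

(* Defs.v *)
From HB Require Import structures.
From mathcomp Require Import all_boot all_order all_algebra.
From mathcomp Require Import all_classical all_reals all_analysis.
Set Implicit Arguments. Unset Strict Implicit. Unset Printing Implicit Defensive.
Import Order.TTheory GRing.Theory Num.Theory.
Import numFieldNormedType.Exports.
Local Open Scope classical_set_scope.
Local Open Scope ring_scope.

Record banach_lattice (R : realType) (E : completeNormedModType R) := BanachLattice {
  ble : E -> E -> Prop;
  bjoin : E -> E -> E;
  ble_refl : forall x, ble x x;
  ble_anti : forall x y, ble x y -> ble y x -> x = y;
  ble_trans : forall x y z, ble x y -> ble y z -> ble x z;
  ble_add : forall x y z, ble x y -> ble (x + z) (y + z);
  ble_scale : forall (a : R) x y, 0 <= a -> ble x y -> ble (a *: x) (a *: y);
  bjoin_ubl : forall x y, ble x (bjoin x y);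
  bjoin_ubr : forall x y, ble y (bjoin x y);
  bjoin_lub : forall x y z, ble x z -> ble y z -> ble (bjoin x y) z;
  blattice_norm : forall x y,
     ble (bjoin x (- x)) (bjoin y (- y)) -> `|x| <= `|y|
}.

Section BL.
Variables (R : realType) (E : completeNormedModType R) (L : banach_lattice E).

Definition babs (x : E) : E := bjoin L x (- x).
Definition bpos (x : E) : E := bjoin L x 0.
Definition bneg (x : E) : E := bjoin L (- x) 0.

Definition dual_elem (f : E -> R) : Prop :=
  (forall (a : R) (x y : E), f (a *: x + y) = a * f x + f y) /\
  exists C : R, forall x, `|f x| <= C * `|x|.

Definition dual_pos (f : E -> R) : Prop := forall x, ble L 0 x -> 0 <= f x.

(* A functional defined on E_+ (additive, positively homogeneous) extended
   to E by  g(x) = g(x^+) - g(x^-). *)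
Definition extend_pos (g : E -> R) : E -> R := fun x => g (bpos x) - g (bneg x).

(* Riesz--Kantorovich formulas for the dual lattice operations. *)
Definition dabs (f : E -> R) : E -> R :=
  extend_pos (fun x => sup [set f y | y in [set y | ble L (babs y) x]]).
Definition dmeet (f g : E -> R) : E -> R :=
  extend_pos (fun x =>
    inf [set f y + g (x - y) | y in [set y | ble L 0 y /\ ble L y x]]).

Definition dual_disjoint (f g : E -> R) : Prop :=
  forall x, dmeet (dabs f) (dabs g) x = 0.

Definition disjoint_seq (f : nat -> E -> R) : Prop :=
  forall n m, n <> m -> dual_disjoint (f n) (f m).

Definition norm_bounded_seq (f : nat -> E -> R) : Prop :=
  exists M : R, forall n x, `|f n x| <= M * `|x|.

Definition weakstar_cvg (f : nat -> E -> R) (g : E -> R) : Prop :=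
  forall x, (fun n => f n x) @ \oo --> g x.

(* Elements of the bidual E'' : bounded linear functionals on E'
   (bounded w.r.t. the dual norm: |phi f| <= C M whenever |f x| <= M |x|). *)
Definition bidual_elem (phi : (E -> R) -> R) : Prop :=
  (forall (a : R) (f g : E -> R), dual_elem f -> dual_elem g ->
     phi (fun x => a * f x + g x) = a * phi f + phi g) /\
  exists C : R, forall (f : E -> R) (M : R), dual_elem f -> 0 <= M ->
     (forall x, `|f x| <= M * `|x|) -> `|phi f| <= C * M.

Definition weak_cvg (f : nat -> E -> R) (g : E -> R) : Prop :=
  forall phi, bidual_elem phi -> (fun n => phi (f n)) @ \oo --> phi g.

Definition uawstar_cvg (f : nat -> E -> R) (g : E -> R) : Prop :=
  forall u, dual_elem u -> dual_pos u ->
    weakstar_cvg (fun n => dmeet (dabs (fun x => f n x - g x)) u) (fun _ => 0).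

Definition WGP : Prop :=
  forall f : nat -> E -> R, (forall n, dual_elem (f n)) -> disjoint_seq f ->
    weakstar_cvg f (fun _ => 0) -> weak_cvg f (fun _ => 0).

Definition DGP : Prop :=
  forall f : nat -> E -> R, (forall n, dual_elem (f n)) -> norm_bounded_seq f ->
    disjoint_seq f -> weak_cvg f (fun _ => 0).

Definition UGP : Prop :=
  forall f : nat -> E -> R, (forall n, dual_elem (f n)) -> norm_bounded_seq f ->
    uawstar_cvg f (fun _ => 0) -> weak_cvg f (fun _ => 0).

End BL.

(* Main.v *)
Require Import Defs.
From HB Require Import structures.
From mathcomp Require Import all_boot all_order all_algebra.
From mathcomp Require Import all_classical all_reals all_analysis.
Set Implicit Arguments. Unset Strict Implicit. Unset Printing Implicit Defensive.
Import Order.TTheory GRing.Theory Num.Theory.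
Import numFieldNormedType.Exports.
Local Open Scope classical_set_scope.
Local Open Scope ring_scope.

Section Lat.
Variables (R : realType) (E : completeNormedModType R) (L : banach_lattice E).
Local Notation le := (ble L).
Local Notation join := (bjoin L).
Definition meet (a b : E) := - join (-a) (-b).

Lemma le_refl x : le x x. Proof. exact: ble_refl. Qed.
Lemma le_tr y x z : le x y -> le y z -> le x z. Proof. exact: ble_trans. Qed.

Lemma le_subP x y : le x y <-> le 0 (y - x).
Proof.
split => h.
  by have := ble_add (-x) h; rewrite subrr.
by have := ble_add x h; rewrite add0r subrK.
Qed.

Lemma le_eq0 a b : le 0 a -> a = b -> le 0 b. Proof. by move=> h <-. Qed.

Lemma le_opp x y : le x y -> le (-y) (-x).
Proof. by move/le_subP => h; apply/le_subP; rewrite opprK addrC. Qed.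

Lemma le_opp' x y : le (-x) (-y) -> le y x.
Proof. by move/le_opp; rewrite !opprK. Qed.

Lemma add_ge0 a b : le 0 a -> le 0 b -> le 0 (a + b).
Proof.
move=> ha hb; apply: (le_tr ha).
by have := ble_add a hb; rewrite add0r addrC.
Qed.

Lemma le_add2 x y x' y' : le x y -> le x' y' -> le (x + x') (y + y').
Proof.
move=> /le_subP h /le_subP h'; apply/le_subP.
apply: le_eq0 (add_ge0 h h') _.
by rewrite opprD addrACA.
Qed.

Lemma meet_l a b : le (meet a b) a.
Proof. by apply: le_opp'; rewrite opprK; apply: bjoin_ubl. Qed.
Lemma meet_r a b : le (meet a b) b.
Proof. by apply: le_opp'; rewrite opprK; apply: bjoin_ubr. Qed.
Lemma meet_glb a b c : le c a -> le c b -> le c (meet a b).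
Proof.
move=> /le_opp ha /le_opp hb; apply: le_opp'; rewrite opprK.
exact: bjoin_lub.
Qed.

Lemma neg_le x : le 0 x -> le (-x) x.
Proof. move=> h; apply: (@le_tr 0) => //; rewrite -oppr0; exact: le_opp. Qed.

Lemma babs_pos y : le 0 y -> babs L y = y.
Proof.
move=> h; apply: ble_anti; last exact: bjoin_ubl.
by apply: bjoin_lub; [apply: le_refl | apply: neg_le].
Qed.

Lemma bpos_pos x : le 0 x -> bpos L x = x.
Proof.
move=> h; apply: ble_anti; last exact: bjoin_ubl.
by apply: bjoin_lub; [apply: le_refl | exact: h].
Qed.

Lemma bneg_pos x : le 0 x -> bneg L x = 0.
Proof.
move=> h; apply: ble_anti; last exact: bjoin_ubr.
apply: bjoin_lub; last exact: le_refl.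
by rewrite -oppr0; apply: le_opp.
Qed.

Lemma bpos_ge0 x : le 0 (bpos L x). Proof. exact: bjoin_ubr. Qed.
Lemma bneg_ge0 x : le 0 (bneg L x). Proof. exact: bjoin_ubr. Qed.

Lemma le_babs z : le z (babs L z). Proof. exact: bjoin_ubl. Qed.
Lemma le_babsN z : le (-z) (babs L z). Proof. exact: bjoin_ubr. Qed.

Lemma babs_le0 z : le (babs L z) 0 -> z = 0.
Proof.
move=> h; apply: ble_anti; first exact: le_tr (le_babs z) h.
by apply: le_opp'; rewrite oppr0; apply: le_tr (le_babsN z) h.
Qed.

Lemma babs_norm z y : le 0 y -> le (babs L z) y -> `|z| <= `|y|.
Proof. move=> y0 h; apply: (@blattice_norm _ _ L); have := babs_pos y0; rewrite /babs => ->; exact: h. Qed.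

Lemma riesz z y1 y2 : le 0 y1 -> le 0 y2 -> le (babs L z) (y1 + y2) ->
  exists z1 z2, [/\ z = z1 + z2, le (babs L z1) y1 & le (babs L z2) y2].
Proof.
move=> h1 h2 hz.
have zle : le z (y1 + y2) := le_tr (le_babs z) hz.
have zge : le (-z) (y1 + y2) := le_tr (le_babsN z) hz.
pose z1 := meet (join z (-y1)) y1.
exists z1, (z - z1); split; first by rewrite addrC subrK.
- apply: bjoin_lub; first exact: meet_r.
  apply: le_opp'; rewrite opprK; apply: meet_glb; first exact: bjoin_ubr.
  exact: neg_le.
- apply: bjoin_lub.
  + apply/le_subP; rewrite opprB.
    have : le (z - y2) z1.
      apply: meet_glb.
        apply: le_tr (bjoin_ubl _ _ _); apply/le_subP.
        by rewrite opprB addrC subrK.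
      apply/le_subP; move/le_subP: zle; move/le_eq0; apply.
      by rewrite opprB addrA.
    move/le_subP; move/le_eq0; apply.
    by rewrite opprB addrCA.
  + rewrite opprB; apply/le_subP.
    have : le z1 (z + y2).
      apply: (@le_tr (join z (-y1))); first exact: meet_l. apply: bjoin_lub.
        by apply/le_subP; rewrite addrC addKr.
      apply/le_subP; rewrite opprK; move/le_subP: zge; move/le_eq0; apply.
      by rewrite opprK addrC (addrC y1) addrA.
    move/le_subP; move/le_eq0; apply.
    by rewrite opprB addrA (addrC y2).
Qed.


Definition gS (f : E -> R) y := [set f z | z in [set z | le (babs L z) y]].
Definition gg (f : E -> R) y := sup (gS f y).

Lemma dualN0 (f : E -> R) : dual_elem f -> f 0 = 0.
Proof.
move=> [lin _]; have := lin 1 0 0; rewrite scale1r addr0 mul1r => h.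
have : f 0 + f 0 - f 0 = f 0 - f 0 by rewrite -h.
by rewrite addrK subrr.
Qed.

Lemma dual_add (f : E -> R) x y : dual_elem f -> f (x + y) = f x + f y.
Proof. by move=> [lin _]; have := lin 1 x y; rewrite scale1r mul1r. Qed.

Lemma dual_sub (f : E -> R) x y : dual_elem f -> f (x - y) = f x - f y.
Proof.
move=> df; have := dual_add (x - y) y df; rewrite subrK => ->.
by rewrite addrK.
Qed.

Lemma babs0 : le (babs L 0) 0.
Proof. by rewrite babs_pos //; apply: le_refl. Qed.

Lemma gS_ne f y : le 0 y -> gS f y !=set0.
Proof. by move=> y0; exists (f 0), 0 => //; rewrite /= babs_pos //; apply: le_refl. Qed.

Lemma gS_hs f y : dual_elem f -> le 0 y -> has_sup (gS f y).
Proof.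
move=> [lin [C HC]] y0; split; first exact: gS_ne.
exists (`|C| * `|y|) => _ [z /= hz <-].
apply: (le_trans (real_ler_norm (num_real (f z)))).
apply: (le_trans (HC z)).
apply: (le_trans (ler_wpM2r (normr_ge0 z) (real_ler_norm (num_real C)))).
by apply: ler_wpM2l => //; apply: babs_norm.
Qed.

Lemma gg_ub f y z : dual_elem f -> le 0 y -> le (babs L z) y -> f z <= gg f y.
Proof. by move=> df y0 hz; apply: (sup_upper_bound (gS_hs df y0)); exists z. Qed.

Lemma gg_ge0 f y : dual_elem f -> le 0 y -> 0 <= gg f y.
Proof.
move=> df y0; rewrite -(dualN0 df); apply: gg_ub => //.
by rewrite babs_pos //; apply: le_refl.
Qed.

Lemma gg0 f : dual_elem f -> gg f 0 = 0.
Proof.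
move=> df; apply/eqP; rewrite eq_le gg_ge0 ?andbT //; last exact: le_refl.
apply: ge_sup; first by apply: gS_ne; apply: le_refl.
by move=> _ [z /= /babs_le0 -> <-]; rewrite dualN0.
Qed.

Lemma gg_sub f y1 y2 : dual_elem f -> le 0 y1 -> le 0 y2 ->
  gg f (y1 + y2) <= gg f y1 + gg f y2.
Proof.
move=> df h1 h2; apply: ge_sup; first by apply: gS_ne; apply: add_ge0.
move=> _ [z /= hz <-].
have [z1 [z2 [-> hz1 hz2]]] := riesz h1 h2 hz.
by rewrite dual_add //; apply: lerD; apply: gg_ub.
Qed.

Lemma dabs_pos f y : dual_elem f -> le 0 y -> dabs L f y = gg f y.
Proof.
move=> df y0; rewrite /dabs /extend_pos bpos_pos // bneg_pos //.
by rewrite -/(gg f y) -/(gg f 0) gg0 // subr0.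
Qed.

Lemma dabs0 f : dabs L f 0 = 0.
Proof. by rewrite /dabs /extend_pos /bpos /bneg oppr0 subrr. Qed.

Lemma dabs_ge0 f y : dual_elem f -> le 0 y -> 0 <= dabs L f y.
Proof. by move=> df y0; rewrite dabs_pos // gg_ge0. Qed.

Lemma dabs_sub f y1 y2 : dual_elem f -> le 0 y1 -> le 0 y2 ->
  dabs L f (y1 + y2) <= dabs L f y1 + dabs L f y2.
Proof.
by move=> df h1 h2; rewrite !dabs_pos ?gg_sub //; apply: add_ge0.
Qed.

Definition HS (a b : E -> R) x := [set a y + b (x - y) | y in [set y | le 0 y /\ le y x]].
Definition HH a b x := inf (HS a b x).

Lemma dmeetE a b x : dmeet L a b x = HH a b (bpos L x) - HH a b (bneg L x).
Proof. by []. Qed.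

Lemma HS_ne a b x : le 0 x -> HS a b x !=set0.
Proof. by move=> x0; exists (a 0 + b (x - 0)), 0 => //; split => //; apply: le_refl. Qed.

Definition posf (a : E -> R) := forall y, le 0 y -> 0 <= a y.

Lemma HS_lb a b x : posf a -> posf b -> lbound (HS a b x) 0.
Proof.
move=> pa pb _ [y [y0 yx] <-]; apply: addr_ge0; first exact: pa.
by apply: pb; exact: (le_subP y x).1 yx.
Qed.

Lemma HH_ge0 a b x : posf a -> posf b -> le 0 x -> 0 <= HH a b x.
Proof. by move=> pa pb x0; apply: lb_le_inf; [apply: HS_ne | apply: HS_lb]. Qed.

Lemma HH_le a b x y : posf a -> posf b -> le 0 y -> le y x ->
  HH a b x <= a y + b (x - y).
Proof.
move=> pa pb y0 yx; apply: ge_inf; first by exists 0; apply: HS_lb.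
by exists y.
Qed.

Lemma HH0 a b : a 0 = 0 -> b 0 = 0 -> HH a b 0 = 0.
Proof.
move=> a0 b0; rewrite /HH (_ : HS a b 0 = [set 0]) ?inf1 //.
apply/seteqP; split => [_ [y [y0 yx] <-]|_ ->].
  have -> : y = 0 by exact: (ble_anti yx y0).
  by rewrite /= subr0 a0 b0 addr0.
by exists 0; [split; apply: le_refl | rewrite subr0 a0 b0 addr0].
Qed.

Lemma dmeet_pos a b x : a 0 = 0 -> b 0 = 0 -> le 0 x -> dmeet L a b x = HH a b x.
Proof. by move=> a0 b0 x0; rewrite dmeetE bpos_pos // bneg_pos // HH0 // subr0. Qed.

Lemma dabs_posf f : dual_elem f -> posf (dabs L f).
Proof. by move=> df y; apply: dabs_ge0. Qed.

Lemma disj_pt f g : dual_elem f -> dual_elem g -> dual_disjoint L f g ->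
  forall x, le 0 x -> forall d, 0 < d ->
  exists y, [/\ le 0 y, le y x & dabs L f y + dabs L g (x - y) < d].
Proof.
move=> df dg fg x x0 d d0.
have := fg x; rewrite dmeet_pos ?dabs0 // => h.
have [_ [y [y0 yx] <-] lt] := @inf_lt _ (HS (dabs L f) (dabs L g) x) d (HS_ne _ _ x0) ltac:(by rewrite -/(HH _ _ _) h).
by exists y.
Qed.

Lemma sum_ge0 (F : nat -> E) N : (forall i, (i < N)%N -> le 0 (F i)) ->
  le 0 (\sum_(i < N) F i).
Proof.
elim: N => [|N IH] hF; first by rewrite big_ord0; apply: le_refl.
rewrite big_ord_recr /=; apply: add_ge0; last exact: hF.
by apply: IH => i iN; apply: hF; rewrite ltnS ltnW.
Qed.

Lemma a_sum (a : E -> R) (F : nat -> E) N : a 0 = 0 ->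
  (forall y1 y2, le 0 y1 -> le 0 y2 -> a (y1 + y2) <= a y1 + a y2) ->
  (forall i, (i < N)%N -> le 0 (F i)) ->
  a (\sum_(i < N) F i) <= \sum_(i < N) a (F i).
Proof.
move=> a0 asub; elim: N => [|N IH] hF; first by rewrite !big_ord0 a0.
rewrite !big_ord_recr /=; apply: (le_trans (asub _ _ _ _)).
- by apply: sum_ge0 => i iN; apply: hF; rewrite ltnS ltnW.
- exact: hF.
by rewrite lerD2r; apply: IH => i iN; apply: hF; rewrite ltnS ltnW.
Qed.

Lemma decomp (a : nat -> E -> R) :
  (forall i, posf (a i)) ->
  (forall i, a i 0 = 0) ->
  (forall i y1 y2, le 0 y1 -> le 0 y2 -> a i (y1 + y2) <= a i y1 + a i y2) ->
  (forall i j, i <> j -> forall x, le 0 x -> forall d, 0 < d ->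
     exists y, [/\ le 0 y, le y x & a i y + a j (x - y) < d]) ->
  forall N p, le 0 p -> forall d, 0 < d ->
  exists w : nat -> E,
    (forall i, (i < N)%N -> [/\ le 0 (w i), le 0 (p - w i) & a i (p - w i) < d])
    /\ le 0 (p - \sum_(i < N) w i).
Proof.
move=> apos a0 asub adisj; elim=> [|N IH] p p0 d d0.
  by exists (fun=> 0); split => //; rewrite big_ord0 subr0.
have d20 : 0 < d / 2 by rewrite divr_gt0.
have [w [hw hs]] := IH p p0 (d / 2) d20.
pose d' := d / 2 / N.+1%:R.
have d'0 : 0 < d' by rewrite divr_gt0 // ltr0n.
have d'le : N%:R * d' <= d / 2.
  rewrite /d' mulrCA; apply: ler_piMr; first exact: ltW.
  by rewrite ler_pdivrMr ?ltr0n // mul1r ler_nat.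
have d'le2 : d' <= d / 2.
  rewrite /d' ler_pdivrMr ?ltr0n // ler_peMr //; first exact: ltW.
  by rewrite ler1n.
have hy : forall i, exists y, (i < N)%N ->
    [/\ le 0 y, le y (w i) & a i y + a N (w i - y) < d'].
  move=> i; case: (ltnP i N) => iN; last by exists 0.
  have [w0 _ _] := hw i iN.
  have iNe : i <> N by move=> e; rewrite e ltnn in iN.
  have [y hy] := adisj i N iNe (w i) w0 d' d'0.
  by exists y.
have [y hy'] := choice hy.
pose S := \sum_(j < N) (w j - y j).
have hwy : forall j, (j < N)%N -> le 0 (w j - y j).
  by move=> j jN; have [_ yw _] := hy' j jN; apply: (le_subP _ _).1.
have hy0 : forall j, (j < N)%N -> le 0 (y j).
  by move=> j jN; have [? _ _] := hy' j jN.
exists (fun i => if (i < N)%N then w i - y i else p - S); split.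
- move=> i; rewrite ltnS leq_eqVlt => /orP [/eqP -> | iN].
  + rewrite ltnn; split.
    * have -> : p - S = (p - \sum_(j < N) w j) + \sum_(j < N) y j.
        by rewrite /S sumrB opprB addrCA addrC.
      by apply: add_ge0 => //; apply: sum_ge0.
    * by rewrite opprB addrC subrK; exact: (sum_ge0 hwy).
    * rewrite opprB addrC subrK.
      apply: (le_lt_trans (a_sum (a0 N) (asub N) hwy)).
      apply: (le_lt_trans (y := N%:R * d')).
        have -> : N%:R * d' = \sum_(j < N) d' by rewrite sumr_const card_ord mulr_natl.
        apply: ler_sum => j _.
        have [_ _ lt] := hy' j (ltn_ord j).
        apply: ltW; apply: le_lt_trans lt; rewrite lerDr.
        by apply: apos; apply: hy0.
      apply: (le_lt_trans d'le); rewrite ltr_pdivrMr // ltr_pMr //.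
      by rewrite ltr1n.
  + rewrite iN; have [w0 pw0 lt] := hw i iN; have [y0 yw lty] := hy' i iN.
    have e : p - (w i - y i) = (p - w i) + y i by rewrite opprB addrCA addrC.
    split; first exact: hwy.
      by rewrite e; apply: add_ge0.
    rewrite e; apply: (le_lt_trans (asub _ _ _ pw0 y0)).
    rewrite [d](splitr d); apply: ltr_leD => //.
    apply: (le_trans (y := d')); last first.
      exact: d'le2.
    apply: ltW; apply: le_lt_trans lty; rewrite lerDl.
    by apply: apos; apply: hwy.
- rewrite big_ord_recr /= ltnn.
  rewrite (eq_bigr (fun j : 'I_N => w j - y j)); last first.
    by move=> j _; rewrite /= ltn_ord.
  rewrite -/S addrC subrK subrr; exact: le_refl.
Qed.

Lemma dual_sum (u : E -> R) (F : nat -> E) N : dual_elem u ->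
  u (\sum_(i < N) F i) = \sum_(i < N) u (F i).
Proof.
move=> du; elim: N => [|N IH]; first by rewrite !big_ord0 dualN0.
by rewrite !big_ord_recr /= dual_add // IH.
Qed.

Lemma sumH_le (f : nat -> E -> R) (u : E -> R) :
  (forall n, dual_elem (f n)) -> disjoint_seq L f ->
  dual_elem u -> dual_pos L u ->
  forall p, le 0 p -> forall N,
  \sum_(i < N) HH (dabs L (f i)) u p <= u p.
Proof.
move=> df fd du pu p p0 N.
have pa : forall i, posf (dabs L (f i)) by move=> i; apply: dabs_posf.
have pu' : posf u by [].
apply/ler_addgt0Pr => e e0.
pose d := e / N.+1%:R.
have d0 : 0 < d by rewrite divr_gt0 // ltr0n.
have [w [hw hs]] := decomp pa (fun i => dabs0 (f i))
   (fun i y1 y2 => @dabs_sub (f i) y1 y2 (df i))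
   (fun i j ij => disj_pt (df i) (df j) (fd i j ij)) N p0 d0.
apply: (le_trans (y := \sum_(i < N) (dabs L (f i) (p - w i) + u (w i)))).
  apply: ler_sum => i _; have [w0 pw0 _] := hw i (ltn_ord i).
  have e1 : p - (p - w i) = w i by rewrite opprB addrC subrK.
  rewrite -[in u (w i)]e1; apply: HH_le => //.
  by apply/le_subP; rewrite e1.
rewrite big_split /= addrC; apply: lerD.
  rewrite -(dual_sum w N du); have := pu _ hs; rewrite dual_sub // subr_ge0.
  by [].
apply: (le_trans (y := \sum_(i < N) d)).
  by apply: ler_sum => i _; have [_ _ /ltW] := hw i (ltn_ord i).
rewrite sumr_const card_ord -mulr_natl /d mulrCA; apply: ler_piMr; first exact: ltW.
by rewrite ler_pdivrMr ?ltr0n // mul1r ler_nat.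
Qed.

Lemma HH_cvg (f : nat -> E -> R) (u : E -> R) :
  (forall n, dual_elem (f n)) -> disjoint_seq L f ->
  dual_elem u -> dual_pos L u ->
  forall p, le 0 p -> (fun n => HH (dabs L (f n)) u p) @ \oo --> 0.
Proof.
move=> df fd du pu p p0; apply: cvg_series_cvg_0.
have pa : forall i, posf (dabs L (f i)) by move=> i; apply: dabs_posf.
apply: nondecreasing_is_cvgn.
  by apply: (@nondecreasing_series _ _ predT 0) => n _ _; apply: HH_ge0.
exists (u p) => _ [n _ <-].
by rewrite /series /= big_mkord; apply: sumH_le.
Qed.

End Lat.
Section P2.
Variables (R : realType) (E : completeNormedModType R) (L : banach_lattice E).

Lemma dual0 (f : E -> R) : dual_elem f -> f 0 = 0.
Proof.
move=> [lin _]; have := lin 1 0 0; rewrite scale1r addr0 mul1r => h.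
have : f 0 + f 0 - f 0 = f 0 - f 0 by rewrite -h.
by rewrite addrK subrr.
Qed.

Lemma ws_bounded (f : nat -> E -> R) : (forall n, dual_elem (f n)) ->
  weakstar_cvg f (fun _ => 0) -> norm_bounded_seq f.
Proof.
move=> df wf.
have BS : uniform_bounded (range f : set (E -> R^o)).
  apply: Banach_Steinhauss.
  - move=> g [n _ <-]; have [lin [C HC]] := df n; split.
    + move=> r; exists (`|C| * r) => x xr.
      apply: (le_trans (HC x)); apply: (le_trans (ler_wpM2r (normr_ge0 x) (real_ler_norm (num_real C)))).
      by apply: ler_wpM2l.
    + move=> a x y; rewrite lin.
      by [].
  - move=> x; have cx : cvgn (fun n => f n x) := cvgP _ (wf x).

    have [M HM] := (@ex_bound _ _ _ _ _ (@globally_properfilter _ setT 0%N I)).1 (cvg_seq_bounded cx).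
    by exists M => g [n _ <-]; apply: HM.
have [M HM] := BS 1.
exists M => n x; have [->|x0] := eqVneq x 0.
  by rewrite dual0 // !normr0 mulr0.
have [lin _] := df n.
have ex : x = `|x| *: (`|x|^-1 *: x) + 0 by rewrite addr0 scalerA divff ?normr_eq0 // scale1r.
rewrite {1}ex lin dual0 // addr0 normrM normr_id mulrC; apply: ler_wpM2r => //.
apply: HM; first by exists n.
by rewrite normrZ normrV ?unitfE ?normr_eq0 // normr_id mulVf ?normr_eq0.
Qed.
End P2.

Theorem lemma2p2 (R : realType) (E : completeNormedModType R)
  (L : banach_lattice E) :
  (UGP L -> DGP L) /\ (DGP L -> WGP L).
Proof.
split.
- move=> hU f df fb fd; apply: hU => // u du pu x.
  have -> : (fun n => dmeet L (dabs L (fun x0 => f n x0 - 0)) u x) =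
      (fun n => HH L (dabs L (f n)) u (bpos L x) - HH L (dabs L (f n)) u (bneg L x)).
    apply: funext => n; rewrite dmeetE.
    by have -> : (fun x0 => f n x0 - 0) = f n by apply: funext => y; rewrite subr0.
  have h := cvgB (HH_cvg df fd du pu (bpos_ge0 L x)) (HH_cvg df fd du pu (bneg_ge0 L x)).
  rewrite subr0 in h; exact: h.
- move=> hD f df fw fws; apply: hD => //; exact: ws_bounded.
Qed.
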